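(* Let $R$ be an integral domain with field of fractions $\mathbb{Q}(R)$, let $M$ be a torsion-free $R$-module, and let $M_{\mathbb{Q}}=M\otimes_R\mathbb{Q}(R)$. Then the map $\mathbb{P}(M)\to\mathbb{P}(M_{\mathbb{Q}})$, $[m]\mapsto[m\otimes1]$, is a well-defined bijection.
   Context: For a module $N$ over an integral domain $S$, let $N^\circ=N\setminus\{0\}$; define $x\sim'y$ on $N^\circ$ if there exist $m\in N$ and $r,s\in S$ with $x=rm$, $y=sm$; let $\sim$ be the equivalence relation generated by $\sim'$; and let $\mathbb{P}(N)=N^\circ/\sim$. For $M_{\mathbb{Q}}$ this is taken over the ring $\mathbb{Q}(R)$, where it coincides with the usual projective space of the $\mathbb{Q}(R)$-vector space. $M$ is torsion-free if $rm=0$ with $r\ne0$ implies $m=0$. *)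

(* Defs.v *)
From HB Require Import structures.
From mathcomp Require Import all_boot all_order all_algebra.
From mathcomp Require Import fraction.
From Stdlib Require Import Relations.
Set Implicit Arguments. Unset Strict Implicit. Unset Printing Implicit Defensive.
Import GRing.Theory.
Local Open Scope ring_scope.

Definition proj_rel (S : idomainType) (N : lmodType S) (x y : N) : Prop :=
  x != 0 /\ y != 0 /\ exists (m : N) (r s : S), x = r *: m /\ y = s *: m.

(* Only ever used on nonzero
   elements, where it is exactly the equivalence on N° generated by ~'
   (the reflexive closure only adds x ~ x, and x ~' x holds already for x <> 0). *)
Definition proj_equiv (S : idomainType) (N : lmodType S) : relation N :=
  clos_refl_sym_trans N (@proj_rel S N).

Definition torsion_free (S : idomainType) (M : lmodType S) : Prop :=
  forall (r : S) (m : M), r != 0 -> r *: m = 0 -> m = 0.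

(* iota : M -> V exhibits V as M (x)_R Q(R) (with iota m = m (x) 1):
   iota is R-linear (R acting on V through R -> Q(R)), and it has the
   universal property of extension of scalars: every R-linear map from M
   into a Q(R)-vector space factors uniquely through a Q(R)-linear map on V. *)
Definition is_base_change_to_frac (R : idomainType) (M : lmodType R)
    (V : lmodType {fraction R}) (iota : M -> V) : Prop :=
  [/\ (forall x y : M, iota (x + y) = iota x + iota y),
      (forall (r : R) (m : M), iota (r *: m) = (@FracField.tofrac R r) *: iota m)
    & forall (W : lmodType {fraction R}) (f : M -> W),
        (forall x y : M, f (x + y) = f x + f y) ->
        (forall (r : R) (m : M), f (r *: m) = (@FracField.tofrac R r) *: f m) ->
        exists g : V -> W,
          [/\ (forall (a : {fraction R}) (u v : V), g (a *: u + v) = a *: g u + g v),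
              (forall m : M, g (iota m) = f m)
            & forall g' : V -> W,
                (forall (a : {fraction R}) (u v : V), g' (a *: u + v) = a *: g' u + g' v) ->
                (forall m : M, g' (iota m) = f m) ->
                forall v : V, g' v = g v]].

(* Main.v *)
Require Import Defs.
From Stdlib Require Import Relations.
From HB Require Import structures.
From mathcomp Require Import all_boot all_order all_algebra.
From mathcomp Require Import fraction generic_quotient ring.
Set Implicit Arguments. Unset Strict Implicit.
Import GRing.Theory.
Local Open Scope ring_scope.
Local Open Scope quotient_scope.

Lemma frac_piE (R : idomainType) (x : {ratio R}) :
  FracField.tofrac (frac x).1 = (\pi_({fraction R}) x) * FracField.tofrac (frac x).2.
Proof.
unlock FracField.tofrac.
rewrite -[_ * _]/(FracField.mul _ _) !piE.
apply/eqmodP => /=; rewrite FracField.equivfE /FracField.mulf.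
rewrite !numden_Ratio ?oner_neq0 ?mulf_neq0 ?oner_neq0 ?denom_ratioP //.
by rewrite mulr1 mul1r.
Qed.

Lemma frac_reprE (R : idomainType) (a : {fraction R}) :
  FracField.tofrac (frac (repr a)).1 = a * FracField.tofrac (frac (repr a)).2.
Proof. by rewrite frac_piE reprK. Qed.

Lemma frac_ex (R : idomainType) (a : {fraction R}) :
  exists n d : R, d != 0 /\ FracField.tofrac n = a * FracField.tofrac d.
Proof. by exists (frac (repr a)).1, (frac (repr a)).2; split; [exact: denom_ratioP | exact: frac_reprE]. Qed.

Section Loc.
Variables (R : idomainType) (M : lmodType R).
Hypothesis tf : torsion_free M.

Definition lpair := {x : M * R | x.2 != 0}.
Definition lp0 : lpair := exist _ (0, 1) (oner_neq0 R).
Definition LP (m : M) (s : R) : lpair := insubd lp0 (m, s).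
Lemma LP_val m s : s != 0 -> val (LP m s) = (m, s).
Proof. by move=> s0; rewrite /LP /insubd insubT. Qed.
Lemma lpd (x : lpair) : (val x).2 != 0. Proof. exact: (svalP x). Qed.

Definition equivl (x y : lpair) :=
  (val y).2 *: (val x).1 == (val x).2 *: (val y).1.

Lemma equivl_refl : reflexive equivl. Proof. by move=> x; rewrite /equivl. Qed.
Lemma equivl_sym : symmetric equivl. Proof. by move=> x y; rewrite /equivl eq_sym. Qed.
Lemma equivl_trans : transitive equivl.
Proof.
move=> [[n t] /= t0] [[m s] /= s0] [[p u] /= u0]; rewrite /equivl /=.
move=> /eqP e1 /eqP e2; apply/eqP.
apply: subr0_eq; apply: (tf t0).
rewrite scalerBr !scalerA [t * u]mulrC [t * s]mulrC -!scalerA e1 -e2.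
by rewrite !scalerA mulrC subrr.
Qed.

Canonical equivl_equiv := EquivRel equivl equivl_refl equivl_sym equivl_trans.
Definition L := {eq_quot equivl}.
HB.instance Definition _ : EqQuotient _ equivl L := EqQuotient.on L.
HB.instance Definition _ := Choice.on L.

Lemma eqv_repr x : equivl x (repr (\pi_L x)).
Proof. by rewrite -eqmodE reprK. Qed.

Lemma piLP (m n : M) (s t : R) : s != 0 -> t != 0 ->
  t *: m = s *: n -> \pi_L (LP m s) = \pi_L (LP n t).
Proof.
move=> s0 t0 e; apply/eqmodP; rewrite /= /equivl !LP_val //.
by apply/eqP.
Qed.

Lemma scale_congr (a b c : R) (u v : M) : b *: u = c *: v -> (a * b) *: u = (a * c) *: v.
Proof. by rewrite -!scalerA => ->. Qed.

Definition addl (x y : lpair) : lpair :=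
  LP ((val y).2 *: (val x).1 + (val x).2 *: (val y).1) ((val x).2 * (val y).2).
Definition oppl (x : lpair) : lpair := LP (- (val x).1) (val x).2.

Lemma addl_compat x x' y y' : equivl x x' -> equivl y y' -> equivl (addl x y) (addl x' y').
Proof.
move: x x' y y' => [[m s] /= s0] [[m' s'] /= s'0] [[n t] /= t0] [[n' t'] /= t'0].
rewrite /equivl /addl /= !LP_val ?mulf_neq0 //= => /eqP e1 /eqP e2; apply/eqP.
rewrite !scalerDr !scalerA.
congr (_ + _).
  have -> : s' * t' * t = (t' * t) * s' by ring.
  have -> : s * t * t' = (t' * t) * s by ring.
  exact: scale_congr.
have -> : s' * t' * s = (s' * s) * t' by ring.
have -> : s * t * s' = (s' * s) * t by ring.
exact: scale_congr.
Qed.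

Lemma oppl_compat x x' : equivl x x' -> equivl (oppl x) (oppl x').
Proof.
move: x x' => [[m s] /= s0] [[m' s'] /= s'0].
by rewrite /equivl /oppl /= !LP_val //= !scalerN => /eqP ->.
Qed.

Definition add := lift_op2 L addl.
Lemma pi_add : {morph \pi : x y / addl x y >-> add x y}.
Proof.
move=> x y; unlock add; apply/eqmodP => /=.
by apply: addl_compat; apply: eqv_repr.
Qed.
Canonical pi_add_morph := PiMorph2 pi_add.

Definition opp := lift_op1 L oppl.
Lemma pi_opp : {morph \pi : x / oppl x >-> opp x}.
Proof.
move=> x; unlock opp; apply/eqmodP => /=.
by apply: oppl_compat; apply: eqv_repr.
Qed.
Canonical pi_opp_morph := PiMorph1 pi_opp.

Definition zero : L := \pi_L lp0.

Lemma addA : associative add.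
Proof.
elim/quotW=> x; elim/quotW=> y; elim/quotW=> z; rewrite !piE.
move: x y z => [[m s] /= s0] [[n t] /= t0] [[p u] /= u0].
rewrite /addl /= !LP_val ?mulf_neq0 //=.
rewrite mulrA; f_equal; f_equal.
rewrite !scalerDr !scalerA addrA; congr (_ + _ + _); congr (_ *: _); ring.
Qed.

Lemma addC : commutative add.
Proof.
elim/quotW=> x; elim/quotW=> y; rewrite !piE /addl.
by rewrite addrC mulrC.
Qed.

Lemma add0 : left_id zero add.
Proof.
elim/quotW=> x; rewrite /zero !piE /addl /=.
move: x => [[m s] /= s0] /=.
rewrite scaler0 add0r scale1r mul1r.
by congr \pi; apply: val_inj; rewrite LP_val.
Qed.

Lemma addN : left_inverse zero opp add.
Proof.
elim/quotW=> x; rewrite /zero !piE /addl /oppl /=.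
move: x => [[m s] /= s0] /=.
apply/eqmodP; rewrite /= /equivl !LP_val ?mulf_neq0 //=.
by rewrite scalerN addNr !scaler0.
Qed.

HB.instance Definition _ := GRing.isZmodule.Build L addA addC add0 addN.

Local Notation tf_ := (@FracField.tofrac R).

Definition scalel (a : {fraction R}) (x : lpair) : lpair :=
  LP ((frac (repr a)).1 *: (val x).1) ((frac (repr a)).2 * (val x).2).

Lemma scalel_compat a x x' : equivl x x' -> equivl (scalel a x) (scalel a x').
Proof.
move: x x' => [[m s] /= s0] [[m' s'] /= s'0].
rewrite /equivl /scalel /= !LP_val ?mulf_neq0 ?denom_ratioP //= => /eqP e.
apply/eqP; rewrite !scalerA.
set n := (frac _).1; set d := (frac _).2.
have -> : d * s' * n = (d * n) * s' by ring.
have -> : d * s * n = (d * n) * s by ring.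
by rewrite -!scalerA e.
Qed.

Definition scale (a : {fraction R}) := lift_op1 L (scalel a).
Lemma pi_scale a : {morph \pi : x / scalel a x >-> scale a x}.
Proof.
move=> x; unlock scale; apply/eqmodP => /=.
by apply: scalel_compat; apply: eqv_repr.
Qed.
Canonical pi_scale_morph a := PiMorph1 (pi_scale a).

Lemma tf_inj (p q : R) : tf_ p = tf_ q -> p = q.
Proof. by move/eqP; rewrite tofrac_eq => /eqP. Qed.

Lemma scaleA a b : forall v : L, scale a (scale b v) = scale (a * b) v.
Proof.
elim/quotW=> x; rewrite !piE.
move: x => [[m s] /= s0].
apply/eqmodP; rewrite /= /equivl /scalel !LP_val ?mulf_neq0 ?denom_ratioP //=.
rewrite !scalerA; apply/eqP; congr (_ *: _).
apply: tf_inj; rewrite !rmorphM /= !frac_reprE; ring.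
Qed.

Lemma scale1_gen (a : {fraction R}) : a = 1 -> forall v : L, scale a v = v.
Proof.
move=> a1; elim/quotW=> x; rewrite !piE.
move: x => [[m s] /= s0].
apply/eqmodP; rewrite /= /equivl /scalel !LP_val ?mulf_neq0 ?denom_ratioP //=.
rewrite !scalerA; apply/eqP; congr (_ *: _).
apply: tf_inj; rewrite !rmorphM /= !frac_reprE a1; ring.
Qed.

Lemma scale1 : left_id 1 scale.
Proof. by move=> v; apply: scale1_gen. Qed.

Lemma scaleDr : right_distributive scale +%R.
Proof.
move=> a; elim/quotW=> x; elim/quotW=> y.
rewrite -[\pi_L x + _]/(add _ _) -[scale a _ + _]/(add _ _) !piE.
move: x y => [[m s] /= s0] [[n t] /= t0].
apply/eqmodP; rewrite /= /equivl /scalel /addl !LP_val ?mulf_neq0 ?denom_ratioP //=.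
rewrite !scalerDr !scalerA; apply/eqP; congr (_ *: _ + _ *: _); ring.
Qed.

Lemma scaleDl : forall v, {morph scale^~ v: a b / a + b}.
Proof.
elim/quotW=> x a b.
rewrite -[scale a _ + _]/(add _ _) !piE.
move: x => [[m s] /= s0].
apply/eqmodP; rewrite /= /equivl /scalel /addl !LP_val ?mulf_neq0 ?denom_ratioP //=.
rewrite !scalerDr !scalerA -scalerDl; apply/eqP; congr (_ *: _).
apply: tf_inj; rewrite !rmorphD !rmorphM /= !frac_reprE; ring.
Qed.

HB.instance Definition _ := GRing.Zmodule_isLmodule.Build {fraction R} L scaleA scale1 scaleDr scaleDl.

End Loc.

Lemma fld1 (F : fieldType) (c d s t : F) : d != 0 -> s != 0 -> t != 0 ->
  (d * s * t)^-1 * (t * (c * d)) = c / s.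
Proof. by move=> d0 s0 t0; field; rewrite d0 s0 t0. Qed.

Lemma fld2 (F : fieldType) (d s t : F) : d != 0 -> s != 0 -> t != 0 ->
  (d * s * t)^-1 * (d * s) = t^-1.
Proof. by move=> d0 s0 t0; field; rewrite d0 s0 t0. Qed.

Lemma rot3 (F : fieldType) (a x y : F) : a * x * y = (x * y) * a.
Proof. by ring. Qed.

Lemma rot3' (F : fieldType) (a x y : F) : a * y * x = (x * y) * a.
Proof. by ring. Qed.

Section Main.
Variables (R : idomainType) (M : lmodType R) (MQ : lmodType {fraction R}) (iota : M -> MQ).
Hypothesis tf : torsion_free M.
Hypothesis iotaD : forall x y : M, iota (x + y) = iota x + iota y.
Hypothesis iotaZ : forall (r : R) (m : M), iota (r *: m) = (@FracField.tofrac R r) *: iota m.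

Local Notation tf_ := (@FracField.tofrac R).
Local Notation LL := (@L R M tf).

Lemma iota0 : iota 0 = 0.
Proof. by apply: (addrI (iota 0)); rewrite addr0 -iotaD addr0. Qed.

Lemma iotaN x : iota (- x) = - iota x.
Proof. by apply: (addrI (iota x)); rewrite -iotaD !subrr iota0. Qed.

Definition j (m : M) : LL := \pi_LL (LP m 1).

Lemma jD x y : j (x + y) = j x + j y.
Proof.
rewrite /j -[_ + j _]/(add _ _) !piE; apply/eqmodP.
by rewrite /= /equivl /addl !LP_val ?mulf_neq0 ?oner_neq0 //= !scale1r mul1r scale1r.
Qed.

Lemma jZ_gen a r m : a = tf_ r -> j (r *: m) = a *: j m.
Proof.
move=> ar.
rewrite /j -[_ *: j _]/(scale _ _) !piE; apply/eqmodP.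
rewrite /= /equivl /scalel !LP_val ?mulf_neq0 ?oner_neq0 ?denom_ratioP //= mulr1 scale1r.
rewrite !scalerA; apply/eqP; congr (_ *: _).
by apply: tf_inj; rewrite rmorphM /= frac_reprE ar mulrC.
Qed.

Lemma jZ r m : j (r *: m) = tf_ r *: j m.
Proof. exact: jZ_gen. Qed.

Lemma j0 m : j m = 0 -> m = 0.
Proof.
rewrite /j -[0]/(zero tf) /zero => /eqmodP.
by rewrite /= /equivl LP_val ?oner_neq0 //= !scale1r => /eqP.
Qed.

Definition h (u : LL) : MQ := (tf_ (val (repr u)).2)^-1 *: iota (val (repr u)).1.

Lemma h_eqv (x y : lpair M) : equivl x y ->
  (tf_ (val x).2)^-1 *: iota (val x).1 = (tf_ (val y).2)^-1 *: iota (val y).1.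
Proof.
move: x y => [[m s] /= s0] [[n t] /= t0]; rewrite /equivl /= => /eqP e.
have := congr1 iota e; rewrite !iotaZ => e'.
have s0' : tf_ s != 0 by rewrite tofrac_eq0.
have t0' : tf_ t != 0 by rewrite tofrac_eq0.
have := congr1 (fun w => ((tf_ s)^-1 * (tf_ t)^-1) *: w) e'; rewrite /= !scalerA.
have -> : (tf_ s)^-1 * (tf_ t)^-1 * tf_ t = (tf_ s)^-1 by rewrite -mulrA mulVf // mulr1.
have -> : (tf_ s)^-1 * (tf_ t)^-1 * tf_ s = (tf_ t)^-1 by rewrite [_ * (tf_ t)^-1]mulrC -mulrA mulVf // mulr1.
by [].
Qed.

Lemma hpi x : h (\pi_LL x) = (tf_ (val x).2)^-1 *: iota (val x).1.
Proof. by rewrite /h; apply: h_eqv; rewrite equivl_sym; apply: eqv_repr. Qed.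

Lemma h_lin (c : {fraction R}) (u v : LL) : h (c *: u + v) = c *: h u + h v.
Proof.
elim/quotW: u => x; elim/quotW: v => y.
rewrite -[c *: _]/(scale _ _) -[scale _ _ + _]/(add _ _) !piE !hpi.
move: x y => [[m s] /= s0] [[n t] /= t0].
rewrite /addl /scalel /= !LP_val ?mulf_neq0 ?denom_ratioP //=.
rewrite iotaD !iotaZ !scalerA !scalerDr !scalerA !rmorphM /= frac_reprE.
have d0 : tf_ (frac (repr c)).2 != 0 by rewrite tofrac_eq0 denom_ratioP.
have s0' : tf_ s != 0 by rewrite tofrac_eq0.
have t0' : tf_ t != 0 by rewrite tofrac_eq0.
congr (_ *: _ + _ *: _); [exact: fld1 | exact: fld2].
Qed.

End Main.

Lemma lin0 (R : idomainType) (W1 W2 : lmodType {fraction R}) (g : W1 -> W2) :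
  (forall a u v, g (a *: u + v) = a *: g u + g v) -> g 0 = 0.
Proof.
move=> gl; have := gl 1 0 0; rewrite !scale1r addr0 => e.
by apply: (addrI (g 0)); rewrite addr0 -e.
Qed.

Lemma proj_equiv_scal (F : fieldType) (V : lmodType F) (u v : V) :
  proj_equiv u v -> exists a b : F, [/\ a != 0, b != 0 & a *: u = b *: v].
Proof.
elim=> {u v}.
- move=> u v [u0 [v0 [w [r [s [eu ev]]]]]]; exists s, r; split.
  + by apply/eqP => s0; move: v0; rewrite ev s0 scale0r eqxx.
  + by apply/eqP => r0; move: u0; rewrite eu r0 scale0r eqxx.
  + by rewrite eu ev !scalerA mulrC.
- by move=> u; exists 1, 1; split; rewrite ?oner_neq0.
- by move=> u v _ [a [b [a0 b0 e]]]; exists b, a; split.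
- move=> u v w _ [a [b [a0 b0 e]]] _ [c [d [c0 d0 e']]].
  exists (c * a), (b * d); split; rewrite ?mulf_neq0 //.
  by rewrite -scalerA e scalerA [c * b]mulrC -[(b * c) *: v]scalerA e' scalerA.
Qed.

Unset Implicit Arguments.
Local Close Scope quotient_scope.

Theorem theorem4p13 (R : idomainType) (M : lmodType R)
    (MQ : lmodType {fraction R}) (iota : M -> MQ) :
  is_base_change_to_frac iota ->
  torsion_free M ->
  [/\ (forall m : M, m != 0 -> iota m != 0),
      (forall x y : M, x != 0 -> y != 0 ->
         proj_equiv x y -> proj_equiv (iota x) (iota y)),
      (forall x y : M, x != 0 -> y != 0 ->
         proj_equiv (iota x) (iota y) -> proj_equiv x y)
    & (forall v : MQ, v != 0 ->
         exists m : M, m != 0 /\ proj_equiv (iota m) v)].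
Proof.
move=> [iD iZ univ] tf.
have iota0' := iota0 iD.
have [g [gl gj _]] := univ (L tf) (j tf) (jD tf) (jZ tf).
have inj0 : forall m, iota m = 0 -> m = 0.
  move=> m e; apply: (j0 (tf:=tf)); rewrite -gj e; exact: lin0 gl.
have injI : forall x y, iota x = iota y -> x = y.
  move=> x y e; apply/eqP; rewrite -subr_eq0; apply/eqP; apply: inj0.
  by rewrite iD (iotaN iD) e subrr.
have [g0 [_ _ uq]] := univ MQ iota iD iZ.
have hg : forall v, h iota (g v) = v.
  move=> v.
  rewrite (uq (fun v => h iota (g v))); last first.
  - move=> m; rewrite gj /j (@hpi R M MQ iota tf iZ) /= LP_val ?oner_neq0 //=.
    by rewrite rmorph1 invr1 scale1r.
  - by move=> a u w; rewrite gl (@h_lin R M MQ iota tf iD iZ).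
  by symmetry; apply: (uq id).
have surj : forall v, exists x : lpair M,
    v = (FracField.tofrac (val x).2)^-1 *: iota (val x).1.
  by move=> v; exists (repr (g v)); rewrite -{1}(hg v) /h.
have part1 : forall m : M, m != 0 -> iota m != 0.
  by move=> m m0; apply/eqP => e; move: m0; rewrite (inj0 m e) eqxx.
split => //.
- move=> x y _ _ H; elim: H => {x y}.
  + move=> a b [a0 [b0 [w [r [s [ea eb]]]]]]; apply: rst_step; split; rewrite ?part1 //.
    split; rewrite ?part1 //.
    by exists (iota w), (FracField.tofrac r), (FracField.tofrac s); rewrite ea eb !iZ.
  + by move=> a; apply: rst_refl.
  + by move=> a b _ IH; apply: rst_sym.
  + by move=> a b c _ IH1 _ IH2; apply: rst_trans IH1 IH2.
- move=> x y x0 y0 /proj_equiv_scal [a [b [a0 b0 e]]].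
  have [na [da [da0 ena]]] := frac_ex a.
  have [nb [db [db0 enb]]] := frac_ex b.
  have na0 : na != 0.
    have : FracField.tofrac na != 0 by rewrite ena mulf_neq0 // tofrac_eq0.
    by rewrite tofrac_eq0.
  have nb0 : nb != 0.
    have : FracField.tofrac nb != 0 by rewrite enb mulf_neq0 // tofrac_eq0.
    by rewrite tofrac_eq0.
  have c10 : na * db != 0 by rewrite mulf_neq0.
  have c20 : nb * da != 0 by rewrite mulf_neq0.
  have ez : (na * db) *: x = (nb * da) *: y.
    apply: injI; rewrite !iZ !rmorphM /= ena enb.
    have -> : a * FracField.tofrac da * FracField.tofrac db =
      (FracField.tofrac da * FracField.tofrac db) * a by apply: rot3.
    have -> : b * FracField.tofrac db * FracField.tofrac da =
      (FracField.tofrac da * FracField.tofrac db) * b by apply: rot3'.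
    by rewrite -!scalerA e.
  have z0 : (na * db) *: x != 0.
    by apply/eqP => z0; move: x0; rewrite (tf _ _ c10 z0) eqxx.
  apply: (@rst_trans _ _ x ((na * db) *: x) y).
  + apply: rst_step; split => //; split => //.
    by exists x, 1, (na * db); rewrite scale1r.
  + apply: rst_step; split => //; split => //.
    by exists y, (nb * da), 1; rewrite scale1r.
- move=> v v0; have [[[m s] /= s0] ev] := surj v.
  have m0 : m != 0.
    by apply/eqP => m0; move: v0; rewrite ev m0 iota0' scaler0 eqxx.
  exists m; split => //.
  apply: rst_step; split; rewrite ?part1 //; split => //.
  by exists (iota m), 1, (FracField.tofrac s)^-1; rewrite scale1r.
Qed.
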